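(* Let $G$ be a connected graph with $n$ vertices and maximum degree $\Delta$, and let $L$ be a list-assignment with $|L(v)|\ge\deg(v)+1$ for all $v\in V(G)$. Let $\mathcal{C}(G,L)^f$ denote the set of frozen $L$-colourings of $G$ and $\mathcal{C}(G,L)$ the set of all $L$-colourings of $G$. Unless $G$ is a complete graph, \[\frac{|\mathcal{C}(G,L)^f|}{|\mathcal{C}(G,L)|}\le 2^{-n/\Delta^4}.\]
   Context: An $L$-colouring is a proper colouring $\varphi$ with $\varphi(v)\in L(v)$ for all $v$. A vertex $v$ is frozen under $\varphi$ if every colour of $L(v)\setminus\{\varphi(v)\}$ appears on a neighbour of $v$; an $L$-colouring is frozen if all its vertices are frozen. *)

(* Defs.v *)
From HB Require Import structures.
From mathcomp Require Import all_boot all_order all_algebra.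
From mathcomp Require Import all_classical all_reals all_analysis.
Set Implicit Arguments. Unset Strict Implicit. Unset Printing Implicit Defensive.
Import Order.TTheory GRing.Theory Num.Theory.

Definition simple_graph (T : finType) (e : rel T) : Prop :=
  symmetric e /\ irreflexive e.

Definition connected_graph (T : finType) (e : rel T) : Prop :=
  forall x y : T, connect e x y.

Definition complete_graph (T : finType) (e : rel T) : Prop :=
  forall x y : T, x != y -> e x y.

Definition deg (T : finType) (e : rel T) (v : T) : nat := #|[set u | e v u]|.

Definition maxdeg (T : finType) (e : rel T) : nat := \max_(v : T) deg e v.

Definition is_Lcol (T C : finType) (e : rel T) (L : T -> {set C})
  (phi : {ffun T -> C}) : bool :=
  [forall v, phi v \in L v] && [forall u, forall v, e u v ==> (phi u != phi v)].

Definition frozen_at (T C : finType) (e : rel T) (L : T -> {set C})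
  (phi : {ffun T -> C}) (v : T) : bool :=
  [forall c in L v, (c != phi v) ==> [exists u, e v u && (phi u == c)]].

Definition is_frozen_Lcol (T C : finType) (e : rel T) (L : T -> {set C})
  (phi : {ffun T -> C}) : bool :=
  is_Lcol e L phi && [forall v, frozen_at e L phi v].

Definition Lcols (T C : finType) (e : rel T) (L : T -> {set C}) :=
  [set phi : {ffun T -> C} | is_Lcol e L phi].

Definition frozen_Lcols (T C : finType) (e : rel T) (L : T -> {set C}) :=
  [set phi : {ffun T -> C} | is_frozen_Lcol e L phi].

(* Main.v *)
Require Import Defs.
From HB Require Import structures.
From mathcomp Require Import all_boot all_order all_algebra.
From mathcomp Require Import all_classical all_reals all_analysis.
From mathcomp Require Import zify.
Import Order.TTheory GRing.Theory Num.Theory.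
Set Implicit Arguments. Unset Strict Implicit. Unset Printing Implicit Defensive.

Lemma frozen_struct (T C : finType) (e : rel T) (L : T -> {set C}) (phi : {ffun T -> C}) :
  (forall v : T, (deg e v + 1 <= #|L v|)%N) -> is_frozen_Lcol e L phi ->
  forall v, {in [set u | e v u] &, injective phi} /\ (forall u, e v u -> phi u \in L v).
Proof.
move=> hL /andP[/andP[/forallP hin _] /forallP hfr] v.
set N := [set u | e v u].
have sub : L v :\ phi v \subset phi @: N.
  apply/fintype.subsetP => c; rewrite !inE => /andP[hne hc].
  have := hfr v; rewrite /frozen_at => /forall_inP /(_ c hc); rewrite hne /=.
  by case/existsP => u /andP[hu /eqP <-]; apply: imset_f; rewrite inE.
have c1 : #|L v| = (1 + #|L v :\ phi v|)%N by rewrite (cardsD1 (phi v)) hin.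
have c2 : (#|phi @: N| <= #|N|)%N by apply: leq_imset_card.
have c3 := hL v; rewrite /deg -/N in c3.
have c4 := subset_leq_card sub.
have eqN : #|phi @: N| == #|N| by rewrite eqn_leq c2 /=; lia.
have eqS : L v :\ phi v == phi @: N by rewrite eqEcard sub /=; lia.
split; first exact/imset_injP.
move=> u hu; have : phi u \in phi @: N by apply: imset_f; rewrite inE.
by rewrite -(eqP eqS) inE => /andP[].
Qed.


Definition nearb (T : finType) (e : rel T) (x y : T) := (x == y) || e x y.

Definition conflict (T : finType) (e : rel T) (a c : T -> T) (g m : T) :=
  has (fun p => has (nearb e p) [:: m; a m]) [:: g; a g; c g] ||
  has (fun p => has (nearb e p) [:: g; a g]) [:: m; a m; c m].

Definition goodt (T : finType) (e : rel T) (a c : T -> T) (m : T) :=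
  [&& e m (a m), e m (c m), a m != c m & ~~ e (a m) (c m)].

Definition sepb (T : finType) (e : rel T) (a c : T -> T) (M : {set T}) :=
  [forall m in M, forall m' in M, (m != m') ==> ~~ conflict e a c m m'].

Definition sig (T : finType) (a : T -> T) (A : {set T}) (x : T) : T :=
  if x \in A then a x else if [pick m in A | a m == x] is Some m then m else x.

Definition psi (T C : finType) (a : T -> T) (A : {set T}) (phi : {ffun T -> C}) :=
  [ffun x => phi (sig a A x)].

Lemma sepP (T : finType) (e : rel T) (a c : T -> T) (M : {set T}) m m' p q :
  sepb e a c M -> m \in M -> m' \in M -> m != m' ->
  p \in [:: m; a m; c m] -> q \in [:: m'; a m'] -> ~~ nearb e p q.
Proof.
move=> /forall_inP /(_ m) H hm hm' hne hp hq.
have /forall_inP /(_ m' hm') := H hm; rewrite hne /= /conflict negb_or => /andP[h1 _].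
apply/negP => hpq; move/negP: h1; apply; apply/hasP; exists p => //.
by apply/hasP; exists q.
Qed.

Section S.
Variables (T : finType) (e : rel T) (a c : T -> T) (M : {set T}).
Hypothesis esym : symmetric e.
Hypothesis eirr : irreflexive e.
Hypothesis hgood : forall m, m \in M -> goodt e a c m.
Hypothesis hsep : sepb e a c M.
Section SA.
Variable A : {set T}.
Hypothesis hAM : A \subset M.

Lemma inAM m : m \in A -> m \in M.
Proof. by move=> h; apply: (fintype.subsetP hAM). Qed.

Lemma eam m : m \in A -> e m (a m).
Proof. by move/inAM/hgood/and4P=> []. Qed.
Lemma ecm m : m \in A -> e m (c m).
Proof. by move/inAM/hgood/and4P=> []. Qed.
Lemma neac m : m \in A -> a m != c m.
Proof. by move/inAM/hgood/and4P=> []. Qed.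
Lemma neac' m : m \in A -> ~~ e (a m) (c m).
Proof. by move/inAM/hgood/and4P=> []. Qed.

Lemma sepA m m' p q : m \in A -> m' \in A -> m != m' ->
  p \in [:: m; a m; c m] -> q \in [:: m'; a m'] -> ~~ nearb e p q.
Proof. by move=> h h'; apply: sepP hsep (inAM h) (inAM h'). Qed.

Lemma am_notA m : m \in A -> a m \notin A.
Proof.
move=> hm; apply/negP => ham.
case: (eqVneq m (a m)) => [h|h].
  by have := eam hm; rewrite -h eirr.
have := sepA hm ham h (p := a m) (q := a m); rewrite !inE !eqxx orbT /nearb eqxx.
by move=> /(_ isT isT).
Qed.

Lemma am_inj m m' : m \in A -> m' \in A -> a m = a m' -> m = m'.
Proof.
move=> hm hm' heq; apply/eqP; apply/negPn/negP => hne.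
have := sepA hm hm' hne (p := a m) (q := a m'); rewrite !inE !eqxx !orbT /nearb heq eqxx.
by move=> /(_ isT isT).
Qed.

Lemma sig_m m : m \in A -> sig a A m = a m.
Proof. by rewrite /sig => ->. Qed.

Lemma sig_am m : m \in A -> sig a A (a m) = m.
Proof.
move=> hm; rewrite /sig (negbTE (am_notA hm)).
case: pickP => [m0 /andP[h0 /eqP h]|/(_ m)]; last by rewrite hm eqxx.
exact: am_inj h.
Qed.

Definition unmoved x := forall m, m \in A -> x != m /\ x != a m.

Lemma sig_id x : unmoved x -> sig a A x = x.
Proof.
move=> hu; rewrite /sig; case: ifP => [hx|_].
  by have [/eqP] := hu x hx.
case: pickP => [m0 /andP[h0 /eqP h]|//].
by have [_ /eqP] := hu m0 h0; rewrite h.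
Qed.

Lemma sig_cases x : (exists2 m, m \in A & x = m) \/ (exists2 m, m \in A & x = a m) \/ unmoved x.
Proof.
case: (boolP [exists m in A, x == m]) => [/exists_inP[m hm /eqP->]|h1]; first by left; exists m.
case: (boolP [exists m in A, x == a m]) => [/exists_inP[m hm /eqP->]|h2]; first by right; left; exists m.
right; right => m hm; split.
  by apply/negP => hx; move/negP: h1; apply; apply/exists_inP; exists m.
by apply/negP => hx; move/negP: h2; apply; apply/exists_inP; exists m.
Qed.

Lemma sig_invol x : sig a A (sig a A x) = x.
Proof.
case: (sig_cases x) => [[m hm ->]|[[m hm ->]|hu]].
- by rewrite (sig_m hm) (sig_am hm).
- by rewrite (sig_am hm) (sig_m hm).
- by rewrite !sig_id.
Qed.

Lemma psi_col (C : finType) (L : T -> {set C}) (phi : {ffun T -> C}) :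
  (forall v : T, (deg e v + 1 <= #|L v|)%N) -> is_frozen_Lcol e L phi ->
  is_Lcol e L (psi a A phi).
Proof.
move=> hL hf.
have FS := frozen_struct hL hf.
have inj : forall v u1 u2, e v u1 -> e v u2 -> phi u1 = phi u2 -> u1 = u2.
  by move=> v u1 u2 h1 h2; have [+ _] := FS v; apply; rewrite inE.
have inL : forall v u, e v u -> phi u \in L v by move=> v u; have [_] := FS v; apply.
move: hf => /andP[/andP[/forallP hin /forallP hpr] _].
have prop : forall x y, e x y -> phi x != phi y.
  by move=> x y h; have /forallP /(_ y) := hpr x; rewrite h.
have nr : forall p q, e p q -> nearb e p q by move=> p q h; rewrite /nearb h orbT.
apply/andP; split.
  apply/forallP => x; rewrite ffunE.
  case: (sig_cases x) => [[m hm ->]|[[m hm ->]|hu]].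
  - by rewrite (sig_m hm); apply: inL; apply: eam.
  - by rewrite (sig_am hm); apply: inL; rewrite esym; apply: eam.
  - by rewrite sig_id.
apply/forallP => x; apply/forallP => y; apply/implyP; rewrite !ffunE.
case: (sig_cases x) => [[m hm ->]|[[m hm ->]|hux]];
case: (sig_cases y) => [[m' hm' ->]|[[m' hm' ->]|huy]] => exy.
- case: (eqVneq m m') => [hmm|hne]; first by rewrite hmm eirr in exy.
  by have := sepA hm hm' hne (p := m) (q := m'); rewrite !inE !eqxx /= (nr _ _ exy) => /(_ isT isT).
- rewrite (sig_m hm) (sig_am hm').
  case: (eqVneq m m') => [<-|hne]; first by rewrite prop // esym eam.
  by have := sepA hm hm' hne (p := m) (q := a m'); rewrite !inE !eqxx /= ?orbT (nr _ _ exy) => /(_ isT isT).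
- rewrite (sig_m hm) (sig_id huy); apply/eqP => h.
  have := inj m _ _ (eam hm) exy h => h'; have [_] := huy m hm; by rewrite h' eqxx.
- rewrite (sig_am hm) (sig_m hm').
  case: (eqVneq m m') => [<-|hne]; first by rewrite prop // eam.
  by have := sepA hm hm' hne (p := a m) (q := m'); rewrite !inE !eqxx /= ?orbT (nr _ _ exy) => /(_ isT isT).
- case: (eqVneq m m') => [hmm|hne]; first by rewrite hmm eirr in exy.
  by have := sepA hm hm' hne (p := a m) (q := a m'); rewrite !inE !eqxx /= ?orbT (nr _ _ exy) => /(_ isT isT).
- rewrite (sig_am hm) (sig_id huy); apply/eqP => h.
  have := inj (a m) _ _ _ exy h; rewrite esym eam // => /(_ isT) h'.
  by have [] := huy m hm; rewrite h' eqxx.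
- rewrite (sig_id hux) (sig_m hm'); apply/eqP => h.
  have := inj m' _ _ _ (eam hm') h; rewrite esym exy => /(_ isT) h'.
  by have [_] := hux m' hm'; rewrite h' eqxx.
- rewrite (sig_id hux) (sig_am hm'); apply/eqP => h.
  have := inj (a m') _ _ _ _ h; rewrite esym exy => /(_ isT); rewrite esym eam // => /(_ isT) h'.
  by have [] := hux m' hm'; rewrite h' eqxx.
- by rewrite (sig_id hux) (sig_id huy) prop.
Qed.

End SA.
Lemma psi_noteq (C : finType) (L : T -> {set C}) (A B : {set T}) (phi phi' : {ffun T -> C}) m :
  A \subset M -> B \subset M ->
  (forall v : T, (deg e v + 1 <= #|L v|)%N) -> is_frozen_Lcol e L phi -> is_frozen_Lcol e L phi' ->
  m \in A -> m \notin B -> psi a A phi = psi a B phi' -> False.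
Proof.
move=> hAM hBM hL hf hf' hmA hmB heq.
have hmM : m \in M := inAM hAM hmA.
have FS := frozen_struct hL hf.
have inj : forall v u1 u2, e v u1 -> e v u2 -> phi u1 = phi u2 -> u1 = u2.
  by move=> v u1 u2 h1 h2; have [+ _] := FS v; apply; rewrite inE.
have inL : forall v u, e v u -> phi u \in L v by move=> v u; have [_] := FS v; apply.
have prop : forall x y, e x y -> phi x != phi y.
  move: hf => /andP[/andP[_ /forallP hpr] _] x y h.
  by have /forallP /(_ y) := hpr x; rewrite h.
have nr : forall p q, e p q -> nearb e p q by move=> p q h; rewrite /nearb h orbT.
have eqn : forall p q, p = q -> nearb e p q by move=> p q ->; rewrite /nearb eqxx.
set cm := c m.
have ecm : e m cm := ecm hAM hmA.
have sepm : forall m0 p q, m0 \in M -> m0 != m -> p \in [:: m; a m; c m] -> q \in [:: m0; a m0] ->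
    ~~ nearb e p q.
  by move=> m0 p q h0 hne hp hq; apply: (sepP hsep hmM h0) => //; rewrite eq_sym.
have uA : unmoved A cm.
  move=> m0 h0; case: (eqVneq m0 m) => [->|hne].
    split; last by rewrite eq_sym (neac hAM hmA).
    by apply/eqP => h; move: ecm; rewrite -/cm -h eirr.
  split; apply/eqP => h.
    by have := sepm m0 cm m0 (inAM hAM h0) hne; rewrite !inE !eqxx ?orbT eqn // => /(_ isT isT).
  by have := sepm m0 cm (a m0) (inAM hAM h0) hne; rewrite !inE !eqxx ?orbT eqn // => /(_ isT isT).
have uB : forall y, e cm y -> unmoved B y.
  move=> y hy m0 h0; have hne : m0 != m by apply/eqP => h; rewrite -h h0 in hmB.
  split; apply/eqP => h.
    by have := sepm m0 cm m0 (inAM hBM h0) hne; rewrite !inE !eqxx ?orbT -h nr // => /(_ isT isT).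
  by have := sepm m0 cm (a m0) (inAM hBM h0) hne; rewrite !inE !eqxx ?orbT -h nr // => /(_ isT isT).
have uBc : unmoved B cm.
  move=> m0 h0; have hne : m0 != m by apply/eqP => h; rewrite -h h0 in hmB.
  split; apply/eqP => h.
    by have := sepm m0 cm m0 (inAM hBM h0) hne; rewrite !inE !eqxx ?orbT eqn // => /(_ isT isT).
  by have := sepm m0 cm (a m0) (inAM hBM h0) hne; rewrite !inE !eqxx ?orbT eqn // => /(_ isT isT).
have pc : phi' cm = phi cm.
  have := congr1 (fun f : {ffun T -> C} => f cm) heq; rewrite /= !ffunE (sig_id uA) (sig_id uBc) => ->; done.
move: hf' => /andP[_ /forallP /(_ cm)] /forall_inP /(_ (phi m)).
rewrite inL; last by rewrite esym.
rewrite pc (prop m cm ecm) => /(_ isT) /existsP[y /andP[ey /eqP hy]].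
have := congr1 (fun f : {ffun T -> C} => f y) heq; rewrite /= !ffunE (sig_id (uB y ey)) hy.
case: (sig_cases A y) => [[m0 h0 hy0]|[[m0 h0 hy0]|huy]].
- rewrite hy0 (sig_m h0); case: (eqVneq m0 m) => [e0|hne].
    by rewrite e0 => h; move: (prop m (a m) (eam hAM hmA)); rewrite h eqxx.
  by have := sepm m0 cm m0 (inAM hAM h0) hne; rewrite !inE !eqxx ?orbT -hy0 nr // => /(_ isT isT).
- rewrite hy0 (sig_am hAM h0); case: (eqVneq m0 m) => [e0|hne].
    by move: ey; rewrite hy0 e0 esym (negbTE (neac' hAM hmA)).
  by have := sepm m0 cm (a m0) (inAM hAM h0) hne; rewrite !inE !eqxx ?orbT -hy0 nr // => /(_ isT isT).
- rewrite (sig_id huy) => h.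
  have ecm' : e cm m by rewrite esym.
  have := inj cm _ _ ey ecm' h => hym.
  by have [] := huy m hmA; rewrite hym eqxx.
Qed.

Lemma count_frozen (C : finType) (L : T -> {set C}) :
  (forall v : T, (deg e v + 1 <= #|L v|)%N) ->
  (#|frozen_Lcols e L| * 2 ^ #|M| <= #|Lcols e L|)%N.
Proof.
move=> hL.
pose F := fun (p : {set T} * {ffun T -> C}) => psi a p.1 p.2.
pose D := finset.setX (finset.powerset M) (frozen_Lcols e L).
have hD : #|D| = (#|frozen_Lcols e L| * 2 ^ #|M|)%N by rewrite cardsX card_powerset mulnC.
have injF : {in D &, injective F}.
  move=> [A phi] [B phi']; rewrite !inE /= => /andP[hA hf] /andP[hB hf'].
  rewrite /F /= => heq.
  have AB : A = B.
    apply/setP => m; case: (boolP (m \in A)) => hmA; case: (boolP (m \in B)) => hmB //.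
      by case: (psi_noteq hA hB hL hf hf' hmA hmB heq).
    by case: (psi_noteq hB hA hL hf' hf hmB hmA (Logic.eq_sym heq)).
  subst B; congr pair; apply/ffunP => x.
  rewrite -(sig_invol hA x).
  by have := congr1 (fun f : {ffun T -> C} => f (sig a A x)) heq; rewrite /= !ffunE.
rewrite -hD -(card_in_imset injF); apply: subset_leq_card.
apply/fintype.subsetP => f /imsetP[[A phi]]; rewrite !inE /= => /andP[hA hf] ->.
by rewrite /F /=; apply: psi_col.
Qed.

End S.


Lemma card_bigcup_le (I U : finType) (A : {pred I}) (F : I -> {set U}) :
  (#|\bigcup_(i in A) F i| <= \sum_(i in A) #|F i|)%N.
Proof.
apply: (big_ind2 (fun (X : {set U}) n => #|X| <= n)%N).
- by rewrite cards0.
- move=> X1 n1 X2 n2 h1 h2; rewrite cardsU; apply: leq_trans (leq_subr _ _) _.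
  exact: leq_add.
- by [].
Qed.

Section Balls.
Variables (T : finType) (e : rel T) (m : T).
Hypothesis esym : symmetric e.
Hypothesis eirr : irreflexive e.

Fixpoint gball (r : nat) : {set T} :=
  match r with 0 => [set m] | r'.+1 => [set y : T | [exists z in gball r', nearb e z y]] end.

Lemma near_sym x y : nearb e x y = nearb e y x.
Proof. by rewrite /nearb eq_sym esym. Qed.

Lemma gball_near r z y : z \in gball r -> nearb e z y -> y \in gball r.+1.
Proof. by move=> hz hn /=; rewrite inE; apply/exists_inP; exists z. Qed.

Lemma gball_sub r : gball r \subset gball r.+1.
Proof. by apply/fintype.subsetP => z hz; apply: gball_near hz _; rewrite /nearb eqxx. Qed.

Lemma gball_card r : #|gball r.+1| = (#|gball r| + #|gball r.+1 :\: gball r|)%N.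
Proof.
by rewrite -(cardsID (gball r) (gball r.+1)) (finset.setIidPr (gball_sub r)).
Qed.

Variable D : nat.
Hypothesis hD : forall v, (deg e v <= D)%N.

Lemma sphere0 : (#|gball 1 :\: gball 0| <= D)%N.
Proof.
apply: leq_trans (hD m); apply: subset_leq_card; apply/fintype.subsetP => y.
rewrite !inE => /andP[hy /exists_inP[z]]; rewrite inE => /eqP -> .
by rewrite /nearb eq_sym (negbTE hy).
Qed.

Lemma sphereS r : (#|gball r.+2 :\: gball r.+1| <= #|gball r.+1 :\: gball r| * D.-1)%N.
Proof.
set S := gball r.+1 :\: gball r.
have sub : gball r.+2 :\: gball r.+1 \subset
    \bigcup_(z in S) ([set y | e z y] :\: gball r.+1).
  apply/fintype.subsetP => y; rewrite inE => /andP[hy].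
  rewrite /= inE => /exists_inP[z hz hzy].
  have hzr : z \notin gball r.
    apply/negP => hz'; move/negP: hy; apply; exact: gball_near hz' hzy.
  apply/bigcupP; exists z; first by rewrite inE hzr.
  rewrite finset.in_setD hy /= inE; move: hzy; rewrite /nearb; case: eqP => [hzy' _|_ //].
  by move/negP: hy; case; rewrite -hzy'; exact: hz.
apply: leq_trans (subset_leq_card sub) _.
apply: leq_trans (card_bigcup_le _ _) _.
rewrite -sum_nat_const; apply: leq_sum => z; rewrite inE => /andP[hz hz1].
move: hz1 => /=; rewrite inE => /exists_inP[w hw hwz].
have hwz' : e z w.
  move: hwz; rewrite /nearb; case: eqP => [hwz2 _|_ h]; first by move/negP: hz; case; rewrite -hwz2.
  by rewrite esym.
have hw1 : w \in gball r.+1 by apply: (fintype.subsetP (gball_sub r)).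
have : [set y | e z y] :\: gball r.+1 \subset [set y | e z y] :\ w.
  apply/fintype.subsetP => y; rewrite finset.in_setD => /andP[hy hy2].
  rewrite finset.in_setD1 hy2 andbT.
  by apply/negP => /eqP hyw; move/negP: hy; apply; rewrite hyw.
move/subset_leq_card => h; apply: leq_trans h _.
have := cardsD1 w [set y | e z y]; rewrite inE hwz' /= => hc.
have := hD z; rewrite /deg; lia.
Qed.

Lemma ball4 : (1 < D)%N -> (#|gball 4| <= D ^ 4)%N.
Proof.
move=> hD2.
have e1 := gball_card 0; have e2 := gball_card 1; have e3 := gball_card 2; have e4 := gball_card 3.
have s0 := sphere0; have s1 := sphere0.
have t1 := sphereS 0; have t2 := sphereS 1; have t3 := sphereS 2.
have b0 : #|gball 0| = 1%N by rewrite /= cards1.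
move: e1 e2 e3 e4 s0 t1 t2 t3 b0.
set x0 := #|gball 0|; set x1 := #|gball 1|; set x2 := #|gball 2|; set x3 := #|gball 3|; set x4 := #|gball 4|.
set y0 := #|gball 1 :\: gball 0|; set y1 := #|gball 2 :\: gball 1|; set y2 := #|gball 3 :\: gball 2|;
set y3 := #|gball 4 :\: gball 3|.
move=> e1 e2 e3 e4 s0 t1 t2 t3 b0.
have hd : D = (D.-1).+1 by lia.
move: t1 t2 t3 s0; rewrite hd /=; set d := D.-1 => t1 t2 t3 s0.
have h1 : (y1 <= d.+1 * d)%N by apply: leq_trans t1 _; rewrite leq_mul2r s0 orbT.
have h2 : (y2 <= d.+1 * d * d)%N by apply: leq_trans t2 _; rewrite leq_mul2r h1 orbT.
have h3 : (y3 <= d.+1 * d * d * d)%N by apply: leq_trans t3 _; rewrite leq_mul2r h2 orbT.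
have : (x4 <= 1 + d.+1 + d.+1 * d + d.+1 * d * d + d.+1 * d * d * d)%N by lia.
move=> h; apply: leq_trans h _.
have hd1 : (1 <= d)%N by lia.
nia.
Qed.

End Balls.


Definition gpred (T : finType) (e : rel T) (g : T) (p : T * T) :=
  [&& e g p.1, e g p.2, p.1 != p.2 & ~~ e p.1 p.2].
Definition isgood (T : finType) (e : rel T) (g : T) := [exists p, gpred e g p].
Definition pr (T : finType) (e : rel T) (g : T) := odflt (g, g) [pick p | gpred e g p].
Definition aa (T : finType) (e : rel T) (g : T) := (pr e g).1.
Definition cc (T : finType) (e : rel T) (g : T) := (pr e g).2.

Lemma good_goodt (T : finType) (e : rel T) g : isgood e g -> goodt e (aa e) (cc e) g.
Proof.
rewrite /isgood /goodt /aa /cc /pr; case: pickP => [p hp _|h]; first by [].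
by case/existsP => p; rewrite h.
Qed.

Lemma cover_good (T : finType) (e : rel T) :
  simple_graph e -> connected_graph e -> ~ complete_graph e ->
  forall w, exists g, nearb e w g && isgood e g.
Proof.
move=> [esym eirr] hcon hnc w.
case: (boolP [exists g, nearb e w g && isgood e g]) => [/existsP //|].
rewrite negb_exists => /forallP hng; exfalso.
have clq : forall g u1 u2, nearb e w g -> e g u1 -> e g u2 -> u1 != u2 -> e u1 u2.
  move=> g u1 u2 hg h1 h2 hne; apply/negPn/negP => hn.
  have := hng g; rewrite hg /= /isgood => /existsP; apply; exists (u1, u2).
  by rewrite /gpred /= h1 h2 hne.
have clo : forall y z, nearb e w y -> e y z -> nearb e w z.
  move=> y z hy hyz; move: (hy); rewrite /nearb; case: (eqVneq w y) => [hw|_] /= hwy.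
    by rewrite hw hyz orbT.
  case: (eqVneq w z) => //= hne.
  apply: (clq y w z hy _ hyz hne); by rewrite esym.
have allN : forall z, nearb e w z.
  have gen : forall p x, nearb e w x -> path e x p -> nearb e w (last x p).
    elim=> [|y p IH] x hx //=; case/andP => hxy hp; exact: IH (clo x y hx hxy) hp.
  move=> z; have /connectP [p hp ->] := hcon w z.
  by apply: gen hp; rewrite /nearb eqxx.
apply: hnc => x y hxy.
have hwx := allN x; have hwy := allN y.
move: hwx hwy; rewrite /nearb.
case: (eqVneq w x) => [hw|hwx] /=; first by subst x; rewrite (negbTE hxy).
case: (eqVneq w y) => [hw|hwy] /=; first by subst y; move=> h _; rewrite esym.
move=> h1 h2; exact: (clq w x y (allN w) h1 h2 hxy).
Qed.

Lemma conflictC (T : finType) (e : rel T) (a c : T -> T) x y :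
  conflict e a c x y = conflict e a c y x.
Proof. by rewrite /conflict orbC. Qed.

Lemma sepb_add (T : finType) (e : rel T) (a c : T -> T) (M : {set T}) g :
  sepb e a c M -> (forall m, m \in M -> m != g -> ~~ conflict e a c g m) ->
  sepb e a c (g |: M).
Proof.
move=> /forall_inP hs hg; apply/forall_inP => m1; rewrite finset.in_setU1 => h1.
apply/forall_inP => m2; rewrite finset.in_setU1 => h2; apply/implyP => hne.
case/orP: h1 => [/eqP e1|h1]; case/orP: h2 => [/eqP e2|h2].
- by rewrite e1 e2 eqxx in hne.
- by rewrite e1; apply: hg => //; rewrite eq_sym -e1.
- by rewrite e2 conflictC; apply: hg => //; rewrite -e2.
- by have /forall_inP /(_ m2 h2) := hs m1 h1; rewrite hne.
Qed.

Lemma conflict_ball (T : finType) (e : rel T) (a c : T -> T) g m :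
  symmetric e -> goodt e a c g -> goodt e a c m -> conflict e a c g m -> g \in gball e m 3.
Proof.
move=> esym /and4P[hag hcg _ _] /and4P[ham hcm _ _].
have b0 : m \in gball e m 0 by rewrite /= inE.
have inb1 : forall p, p \in [:: m; a m; c m] -> p \in gball e m 1.
  move=> p hp; have : [|| p == m, p == a m | p == c m] by move: hp; rewrite !inE.
  case/or3P => /eqP ->; apply: gball_near b0 _; rewrite /nearb ?eqxx //.
    by rewrite ham orbT.
  by rewrite hcm orbT.
have nearg : forall p, p \in [:: g; a g; c g] -> nearb e p g.
  move=> p; rewrite !inE => /or3P[] /eqP ->; rewrite /nearb ?eqxx //.
    by rewrite esym hag orbT.
  by rewrite esym hcg orbT.
case/orP => /hasP[p hp /hasP[q hq hpq]].
- have hq1 : q \in gball e m 1 by apply: inb1; move: hq; rewrite !inE => /orP[] ->; rewrite ?orbT //=.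
  have hp2 : p \in gball e m 2 by apply: gball_near hq1 _; rewrite (near_sym esym).
  exact: gball_near hp2 (nearg p hp).
- have hq2 : q \in gball e m 2 by apply: gball_near (inb1 p hp) hpq.
  apply: gball_near hq2 _; apply: nearg; move: hq; rewrite !inE => /orP[] ->; rewrite ?orbT //=.
Qed.


Lemma main_nat (T C : finType) (e : rel T) (L : T -> {set C}) :
  simple_graph e -> connected_graph e ->
  (forall v : T, (deg e v + 1 <= #|L v|)%N) ->
  ~ complete_graph e ->
  exists k : nat, (#|frozen_Lcols e L| * 2 ^ k <= #|Lcols e L|)%N /\ (#|T| <= k * maxdeg e ^ 4)%N.
Proof.
move=> hs hc hL hnc; have [esym eirr] := hs.
pose a := aa e; pose c := cc e.
pose G := [set g | isgood e g].
pose P := fun S : {set T} => sepb e a c S && (S \subset G).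
have P0 : P finset.set0.
  rewrite /P finset.sub0set andbT; apply/forall_inP => m; by rewrite inE.
case: (arg_maxnP (fun S : {set T} => #|S|) P0) => M /andP[hsep hMG] hmax.
have hgood : forall m, m \in M -> goodt e a c m.
  by move=> m /(fintype.subsetP hMG); rewrite inE => /good_goodt.
exists #|M|; split; first exact: (count_frozen esym eirr hgood hsep hL).
set D := maxdeg e.
have hD : forall v, (deg e v <= D)%N by move=> v; apply: (leq_bigmax v).
have cov : forall w, exists2 m, m \in M & w \in gball e m 4.
  move=> w; have [g /andP[hwg hg]] := cover_good hs hc hnc w.
  have hgw : nearb e g w by rewrite (near_sym esym).
  case: (boolP (g \in M)) => hgM.
    exists g => //; apply: gball_near hgw.
    have h0 : g \in gball e g 0 by rewrite /= inE.
    do 3! apply: (fintype.subsetP (gball_sub _ _ _)).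
    exact: h0.
  case: (boolP [exists m in M, (m != g) && conflict e a c g m]).
    case/exists_inP => m hm /andP[_ hcf]; exists m => //.
    apply: gball_near hgw; apply: conflict_ball esym _ (hgood m hm) hcf.
    exact: good_goodt.
  rewrite negb_exists_in => /forall_inP hno; exfalso.
  have hP : P (g |: M).
    rewrite /P; apply/andP; split.
      apply: sepb_add hsep _ => m hm hne; have := hno m hm; rewrite hne /=; done.
    by rewrite finset.subUset finset.sub1set inE hg hMG.
  have := hmax _ hP; rewrite cardsU1 hgM /=; lia.
have cardT : (#|T| <= \sum_(m in M) #|gball e m 4|)%N.
  rewrite -cardsT; apply: leq_trans (card_bigcup_le _ _).
  apply: subset_leq_card; apply/fintype.subsetP => w _.
  by have [m hm hw] := cov w; apply/bigcupP; exists m.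
apply: leq_trans cardT _; rewrite -sum_nat_const; apply: leq_sum => m hm.
apply: (ball4 m esym hD).
have /and4P[h1 h2 h3 _] := hgood m hm.
apply: leq_trans (hD m); rewrite /deg.
have <- : #|[set a m; c m]| = 2%N by rewrite cards2 h3.
by apply: subset_leq_card; rewrite finset.subUset !finset.sub1set !inE h1 h2.
Qed.

Unset Implicit Arguments.
Local Open Scope ring_scope.

Theorem mainTheorem19 (R : realType) (T C : finType) (e : rel T) (L : T -> {set C}) :
  simple_graph e -> connected_graph e ->
  (forall v : T, (deg e v + 1 <= #|L v|)%N) ->
  ~ complete_graph e ->
  (#|frozen_Lcols e L|%:R / #|Lcols e L|%:R : R)
    <= (2 : R) `^ (- ((#|T|%:R : R) / ((maxdeg e)%:R ^+ 4))).
Proof.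
move=> hs hc hL hnc.
have [k [h1 h2]] := @main_nat T C e L hs hc hL hnc.
set F := #|frozen_Lcols e L|; set Lc := #|Lcols e L|; set n := #|T|; set D := maxdeg e.
move: h1 h2; rewrite -/F -/Lc -/n -/D => h1 h2.
have step1 : (F%:R / Lc%:R : R) <= (2 ^+ k)^-1.
  have [->|hLc] := eqVneq Lc 0%N.
    by rewrite invr0 mulr0 invr_ge0 exprn_ge0.
  have hLc' : (0 : R) < Lc%:R by rewrite ltr0n lt0n.
  rewrite ler_pdivrMr // mulrC ler_pdivlMr ?exprn_gt0 //.
  have : ((F * 2 ^ k)%:R : R) <= Lc%:R by rewrite ler_nat.
  by rewrite natrM natrX.
apply: le_trans step1 _.
rewrite -powR_mulrn // -powRN.
apply: ler_powR; first by rewrite ler1n.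
rewrite lerN2.
have [->|hD0] := eqVneq D 0%N.
  by rewrite expr0n /= invr0 mulr0.
have hD' : (0 : R) < D%:R ^+ 4 by rewrite exprn_gt0 // ltr0n lt0n.
rewrite ler_pdivrMr //.
have : ((k * D ^ 4)%:R : R) >= n%:R by rewrite ler_nat.
by rewrite natrM natrX.
Qed.
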